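(* Let $n_1,n_2\ge1$ be integers and let $X\sim\mathrm{Bino}(n_1,p_1)$ and $Y\sim\mathrm{Bino}(n_2,p_2)$ be independent, with parameter of interest $d=p_1-p_2\in[-1,1]$. Fix $\alpha\in[0,1]$. Let $S_d=\{0,\dots,n_1\}\times\{0,\dots,n_2\}$ and for $d_0\in[-1,1]$ let $D(d_0)=[0,1-d_0]$ if $d_0\in[0,1]$ and $D(d_0)=[-d_0,1]$ if $d_0\in[-1,0)$. Let $T_d:S_d\times[-1,1]\to\mathbb{R}$ be a test statistic satisfying $$T_d(x,y,d_0)=T_d(n_1-x,n_2-y,-d_0)\quad\text{for all }(x,y)\in S_d,\ d_0\in[-1,1].$$ Define $$h_d(x,y,d_0)=\sup_{p_2\in D(d_0)}\ \sum_{\{(u,v)\in S_d:\,T_d(u,v,d_0)\le T_d(x,y,d_0)\}} p_B(u,n_1,p_2+d_0)\,p_B(v,n_2,p_2),$$ and $C_d(x,y)=\overline{\{d_0\in[-1,1]: h_d(x,y,d_0)>\alpha\}}$, written $C_d(x,y)=[L_d(x,y),U_d(x,y)]$. Then $$U_d(x,y)=-L_d(n_1-x,n_2-y)\quad\text{for all }(x,y)\in S_d.$$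
   Context: $p_B(y,n,p)=\binom{n}{y}p^y(1-p)^{n-y}$ denotes the binomial probability mass function. For a set $A\subseteq\mathbb{R}$, $\overline{A}$ denotes the smallest closed simply connected set (i.e. closed interval) containing $A$. A small value of $T_d$ is regarded as evidence against $H_0:d=d_0$. *)

(* Defs.v *)
From HB Require Import structures.
From mathcomp Require Import all_boot all_order all_algebra.
From mathcomp Require Import all_classical all_reals all_analysis.
Set Implicit Arguments. Unset Strict Implicit. Unset Printing Implicit Defensive.
Import Order.TTheory GRing.Theory Num.Theory.
Import numFieldNormedType.Exports.
Local Open Scope classical_set_scope.
Local Open Scope ring_scope.

Section Defs.
Variable R : realType.

Definition pB (y n : nat) (p : R) : R := ('C(n, y))%:R * p ^+ y * (1 - p) ^+ (n - y).

Definition Dset (d0 : R) : set R :=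
  if 0 <= d0 then [set p | 0 <= p <= 1 - d0] else [set p | - d0 <= p <= 1].

Variables (n1 n2 : nat) (alpha : R) (T : nat -> nat -> R -> R).

Definition hd (x y : nat) (d0 : R) : R :=
  sup [set (\sum_(u < n1.+1) \sum_(v < n2.+1 | T u v d0 <= T x y d0)
              pB u n1 (p2 + d0) * pB v n2 p2) | p2 in Dset d0].

Definition Aset (x y : nat) : set R :=
  [set d0 | -1 <= d0 <= 1 /\ hd x y d0 > alpha].

Definition hull (A : set R) : set R :=
  \bigcap_(I in [set I : set R | closed I /\ connected I /\ A `<=` I]) I.

Definition Cd (x y : nat) : set R := hull (Aset x y).
Definition Ld (x y : nat) : R := inf (Cd x y).
Definition Ud (x y : nat) : R := sup (Cd x y).
End Defs.

(* Main.v *)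
Require Import Defs.
From HB Require Import structures.
From mathcomp Require Import all_boot all_order all_algebra.
From mathcomp Require Import all_classical all_reals all_analysis.
From mathcomp Require Import ring lra.
Import Order.TTheory GRing.Theory Num.Theory.
Import numFieldNormedType.Exports.
Local Open Scope classical_set_scope.
Local Open Scope ring_scope.

Section H1.
Variable R : realType.

Lemma pB_rev (u n : nat) (a : R) : (u <= n)%N -> pB (n - u) n (1 - a) = pB u n a.
Proof.
move=> hu; rewrite /pB bin_sub // subKn //.
have -> : 1 - (1 - a) = a by ring.
by rewrite mulrAC.
Qed.

Lemma Dset_rev (d0 p : R) : Dset d0 p -> Dset (- d0) (1 - p).
Proof.
rewrite /Dset oppr_ge0; case: ifPn => h1; case: ifPn => h2 /= /andP [hp1 hp2];
  apply/andP; rewrite -?ltNge in h1 h2; split; lra.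
Qed.

Variables (n1 n2 : nat) (T : nat -> nat -> R -> R).
Hypothesis hT : forall (x y : nat) (d0 : R), (x <= n1)%N -> (y <= n2)%N ->
          -1 <= d0 <= 1 -> T x y d0 = T (n1 - x)%N (n2 - y)%N (- d0).

Lemma sum_rev x y d0 p : (x <= n1)%N -> (y <= n2)%N -> -1 <= d0 <= 1 ->
  \sum_(u < n1.+1) \sum_(v < n2.+1 | T u v (- d0) <= T (n1 - x)%N (n2 - y)%N (- d0))
     pB u n1 ((1 - p) + - d0) * pB v n2 (1 - p)
  = \sum_(u < n1.+1) \sum_(v < n2.+1 | T u v d0 <= T x y d0)
     pB u n1 (p + d0) * pB v n2 p.
Proof.
move=> hx hy hd.
rewrite (reindex_inj rev_ord_inj) /=; apply: eq_bigr => u _.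
rewrite (reindex_inj rev_ord_inj) /=; apply: eq_big => v.
  by rewrite -!hT // -ltnS.
move=> _; change (n1.+1 - u.+1)%N with (n1 - u)%N.
change (n2.+1 - v.+1)%N with (n2 - v)%N.
have -> : 1 - p + - d0 = 1 - (p + d0) by ring.
by rewrite !pB_rev // -ltnS.
Qed.

Lemma hd_sym x y d0 : (x <= n1)%N -> (y <= n2)%N -> -1 <= d0 <= 1 ->
  hd n1 n2 T (n1 - x) (n2 - y) (- d0) = hd n1 n2 T x y d0.
Proof.
move=> hx hy hd; rewrite /hd; congr sup; apply/seteqP; split.
- move=> _ [q Dq <-]; exists (1 - q).
    by have := @Dset_rev _ _ Dq; rewrite opprK.
  rewrite -sum_rev //; have -> : 1 - (1 - q) = q by ring. by [].
- move=> _ [p Dp <-]; exists (1 - p); first exact: (@Dset_rev _ _ Dp).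
  by rewrite sum_rev.
Qed.
End H1.
Section H.
Variable R : realType.
Definition Nset (A : set R) : set R := [set - x | x in A].

Lemma NsetP (A : set R) z : Nset A z <-> A (- z).
Proof.
split; first by case=> w Aw <-; rewrite opprK.
by move=> Az; exists (- z) => //; rewrite opprK.
Qed.

Lemma NsetK (A : set R) : Nset (Nset A) = A.
Proof. by apply/seteqP; split => z; rewrite !NsetP opprK. Qed.

Lemma Nset_pre (A : set R) : Nset A = (-%R) @^-1` A.
Proof. by apply/seteqP; split => z; rewrite NsetP. Qed.

Lemma hull_N_sub (A : set R) : hull (Nset A) `<=` Nset (hull A).
Proof.
move=> z hz; apply/NsetP => I [cI [coI AI]].
have : Nset I z.
  apply: hz; split; [|split].
  - rewrite Nset_pre; exact: (proj1 (continuous_closedP _) opp_continuous).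
  - have := @connected_continuous_connected _ _ I (-%R) coI; apply.
 Unshelve.
    apply: continuous_subspaceT => x; exact: opp_continuous.
  - by move=> w /NsetP /AI /NsetP.
by move/NsetP.
Qed.

Lemma hull_N (A : set R) : hull (Nset A) = Nset (hull A).
Proof.
apply/seteqP; split; first exact: hull_N_sub.
move=> z /NsetP hz.
have := hull_N_sub (Nset A).
rewrite NsetK => /(_ (- z) hz) /NsetP; by rewrite opprK.
Qed.
End H.

Theorem proposition2 (R : realType) (n1 n2 : nat) (alpha : R)
  (T : nat -> nat -> R -> R)
  (hn1 : (1 <= n1)%N) (hn2 : (1 <= n2)%N)
  (halpha : 0 <= alpha <= 1)
  (hT : forall (x y : nat) (d0 : R), (x <= n1)%N -> (y <= n2)%N ->
          -1 <= d0 <= 1 -> T x y d0 = T (n1 - x)%N (n2 - y)%N (- d0)) :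
  forall x y : nat, (x <= n1)%N -> (y <= n2)%N ->
    Ud n1 n2 alpha T x y = - Ld n1 n2 alpha T (n1 - x)%N (n2 - y)%N.
Proof.
move=> x y hx hy.
have HA : Aset n1 n2 alpha T x y = @Nset R (Aset n1 n2 alpha T (n1 - x) (n2 - y)).
  apply/seteqP; split => d; rewrite NsetP /Aset /=.
  - case=> /andP [h1 h2] ha; split; first by apply/andP; split; lra.
    rewrite (@hd_sym R n1 n2 T hT) //; exact/andP.
  - case=> /andP [h1 h2] ha.
    have hd : -1 <= d <= 1 by apply/andP; split; lra.
    split => //; by rewrite -(@hd_sym R n1 n2 T hT).
rewrite /Ud /Ld /Cd HA hull_N /inf opprK.
by [].
Qed.
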